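(* Let $R$ be a ring and let $A=\sigma(R)\langle x_1,\dots,x_n\rangle$ be a bijective skew PBW extension of $R$ with associated family $\Sigma$. Suppose $R$ is $\Sigma$-rigid, Abelian and NI. If $R$ is a right (resp. left) p.p.-ring, then $A$ has Property $(a.c.)$ on the right (resp. left).
   Context: All rings are associative with identity. For $S\subseteq T$ (a ring $T$), $r_T(S)=\{a\in T: Sa=0\}$ and $\ell_T(S)=\{a\in T: aS=0\}$. A ring $A$ is a skew PBW extension of $R$, written $A=\sigma(R)\langle x_1,\dots,x_n\rangle$, if: (i) $R$ is a subring of $A$ with the same identity; (ii) there are elements $x_1,\dots,x_n\in A$ such that $A$ is a free left $R$-module with basis the standard monomials $x^\alpha=x_1^{\alpha_1}\cdots x_n^{\alpha_n}$, $\alpha\in\mathbb N^n$ (with $x^0=1$); (iii) for each $i$ and each nonzero $r\in R$ there is nonzero $c_{i,r}\in R$ with $x_ir-c_{i,r}x_i\in R$; (iv) for all $i,j$ there is nonzero $d_{i,j}\in R$ with $x_jx_i-d_{i,j}x_ix_j\in R+Rx_1+\cdots+Rx_n$. For such $A$ there are injective endomorphisms $\sigma_i$ of $R$ and $\sigma_i$-derivations $\delta_i$ of $R$ with $x_ir=\sigma_i(r)x_i+\delta_i(r)$ for all $r\in R$; $\Sigma=\{\sigma_1,\dots,\sigma_n\}$. For $\alpha\in\mathbb N^n$, $\sigma^\alpha=\sigma_1^{\alpha_1}\circ\cdots\circ\sigma_n^{\alpha_n}$. The extension is bijective if each $\sigma_i$ is bijective and each $d_{i,j}$ ($1\le i<j\le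 n$) is invertible. $R$ is $\Sigma$-rigid if for $a\in R$ and $\alpha\in\mathbb N^n$, $a\sigma^\alpha(a)=0$ implies $a=0$. $R$ is Abelian if every idempotent of $R$ is central. $R$ is NI if the upper nilradical $\mathrm{nil}^*(R)$ (sum of all nil ideals) equals the set $\mathrm{nil}(R)$ of nilpotent elements. $R$ is a right (resp. left) p.p.-ring if for each $a\in R$ there is an idempotent $e$ with $r_R(a)=eR$ (resp. $\ell_R(a)=Re$). A ring $T$ has Property $(a.c.)$ on the right if for every finitely generated right ideal $I$ of $T$ there is $c\in T$ with $r_T(I)=r_T(cT)$; on the left if for every finitely generated left ideal $I$ there is $c\in T$ with $\ell_T(I)=\ell_T(Tc)$. *)

(* Defs.v *)
From HB Require Import structures.
From mathcomp Require Import all_boot all_order all_algebra.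
Set Implicit Arguments. Unset Strict Implicit. Unset Printing Implicit Defensive.
Import GRing.Theory.
Local Open Scope ring_scope.

Definition expo (n : nat) := {ffun 'I_n -> nat}.

Definition smon (A : pzRingType) (n : nat) (x : 'I_n -> A) (alpha : expo n) : A :=
  \prod_(i < n) x i ^+ alpha i.

(* sigma^alpha = sigma_1^alpha_1 o ... o sigma_n^alpha_n *)
Definition sigma_pow (R : Type) (n : nat) (sigma : 'I_n -> R -> R) (alpha : expo n)
  : R -> R :=
  foldr (fun i f => iter (alpha i) (sigma i) \o f) id (enum 'I_n).

(* A = sigma(R)<x_1,...,x_n> is a skew PBW extension of R, where R is
   identified with its image under the injective unital ring morphism phi. *)
Definition skew_PBW (R A : pzRingType) (phi : {rmorphism R -> A}) (n : nat)
  (x : 'I_n -> A) (d : 'I_n -> 'I_n -> R) : Prop :=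
  [/\ injective phi,
      (forall a : A, exists (s : seq (expo n)) (c : expo n -> R),
          a = \sum_(m <- s) phi (c m) * smon x m),
      (forall (s : seq (expo n)) (c : expo n -> R), uniq s ->
          \sum_(m <- s) phi (c m) * smon x m = 0 -> forall m, m \in s -> c m = 0),
      (forall (i : 'I_n) (r : R), r != 0 ->
          exists2 c : R, c != 0 & exists t : R, x i * phi r - phi c * x i = phi t)
    &
      (forall i j : 'I_n, d i j != 0 /\
          exists (r0 : R) (rs : 'I_n -> R),
            x j * x i - phi (d i j) * x i * x j = phi r0 + \sum_(k < n) phi (rs k) * x k)].

Definition sigma_rigid (R : pzRingType) (n : nat) (sigma : 'I_n -> R -> R) : Prop :=
  forall (a : R) (alpha : expo n), a * sigma_pow sigma alpha a = 0 -> a = 0.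

Definition idempotent_el (R : pzRingType) (e : R) : Prop := e * e = e.

Definition abelian_ring (R : pzRingType) : Prop :=
  forall e : R, idempotent_el e -> forall r : R, e * r = r * e.

Definition nilpotent_el (R : pzRingType) (a : R) : Prop := exists k : nat, a ^+ k = 0.

Definition is_ideal (R : pzRingType) (I : R -> Prop) : Prop :=
  [/\ I 0, (forall a b, I a -> I b -> I (a + b)), (forall a, I a -> I (- a)),
      (forall a r, I a -> I (r * a)) & (forall a r, I a -> I (a * r))].

Definition nil_ideal (R : pzRingType) (I : R -> Prop) : Prop :=
  is_ideal I /\ forall a, I a -> nilpotent_el a.

(* upper nilradical nil^*(R): the sum of all nil ideals (finite sums of
   elements of nil ideals) *)
Definition upper_nilradical (R : pzRingType) (a : R) : Prop :=
  exists s : seq R, (forall b, b \in s -> exists I, nil_ideal I /\ I b) /\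
                    a = \sum_(b <- s) b.

Definition NI_ring (R : pzRingType) : Prop :=
  forall a : R, upper_nilradical a <-> nilpotent_el a.

Definition r_ann (T : pzRingType) (S : T -> Prop) (b : T) : Prop :=
  forall a, S a -> a * b = 0.
Definition l_ann (T : pzRingType) (S : T -> Prop) (b : T) : Prop :=
  forall a, S a -> b * a = 0.

Definition right_pp (R : pzRingType) : Prop :=
  forall a : R, exists e : R, idempotent_el e /\
    forall b, r_ann (fun y => y = a) b <-> exists t, b = e * t.
Definition left_pp (R : pzRingType) : Prop :=
  forall a : R, exists e : R, idempotent_el e /\
    forall b, l_ann (fun y => y = a) b <-> exists t, b = t * e.

Definition rideal_gen (T : pzRingType) (s : seq T) (y : T) : Prop :=
  exists t : 'I_(size s) -> T, y = \sum_(k < size s) s`_k * t k.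
Definition lideal_gen (T : pzRingType) (s : seq T) (y : T) : Prop :=
  exists t : 'I_(size s) -> T, y = \sum_(k < size s) t k * s`_k.

Definition ac_right (T : pzRingType) : Prop :=
  forall s : seq T, exists c : T,
    forall b, r_ann (rideal_gen s) b <-> r_ann (rideal_gen [:: c]) b.
Definition ac_left (T : pzRingType) : Prop :=
  forall s : seq T, exists c : T,
    forall b, l_ann (lideal_gen s) b <-> l_ann (lideal_gen [:: c]) b.

Definition invertible_el (R : pzRingType) (a : R) : Prop :=
  exists u : R, u * a = 1 /\ a * u = 1.

(* Main.v *)
Require Import Defs.
From HB Require Import structures.
From mathcomp Require Import all_boot all_order all_algebra.
From mathcomp Require Import zify.
Set Implicit Arguments. Unset Strict Implicit. Unset Printing Implicit Defensive.

Section Expo.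
Variable n : nat.

Definition ez : expo n := [ffun _ => 0%N].
Definition eadd (a b : expo n) : expo n := [ffun i => (a i + b i)%N].
Definition eunit (j : 'I_n) : expo n := [ffun k => nat_of_bool (k == j)].
Definition edeg (a : expo n) : nat := (\sum_(i < n) a i)%N.
Definition elast (j : 'I_n) (a : expo n) : Prop := forall k : 'I_n, (j < k)%N -> a k = 0%N.

Lemma edeg_add a b : edeg (eadd a b) = (edeg a + edeg b)%N.
Proof. by rewrite /edeg -big_split /=; apply: eq_bigr => i _; rewrite ffunE. Qed.

Lemma edeg_unit j : edeg (eunit j) = 1%N.
Proof.
rewrite /edeg (bigD1 j) //= ffunE eqxx big1 ?addn0 // => i /negbTE H.
by rewrite ffunE H.
Qed.

Lemma edeg_ez : edeg ez = 0%N.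
Proof. by rewrite /edeg big1 // => i _; rewrite ffunE. Qed.

Lemma edeg0 a : edeg a = 0%N -> a = ez.
Proof.
move=> H; apply/ffunP => i; rewrite ffunE.
apply/eqP; rewrite -leqn0 -H /edeg (bigD1 i) //=; exact: leq_addr.
Qed.

Lemma eaddC a b : eadd a b = eadd b a.
Proof. by apply/ffunP => i; rewrite !ffunE addnC. Qed.
Lemma eaddA a b c : eadd a (eadd b c) = eadd (eadd a b) c.
Proof. by apply/ffunP => i; rewrite !ffunE addnA. Qed.
Lemma eadd0 a : eadd a ez = a.
Proof. by apply/ffunP => i; rewrite !ffunE addn0. Qed.

Lemma sorted_split (s1 s2 : seq nat) j : sorted ltn (s1 ++ j :: s2) ->
  (forall k, k \in s1 -> (k < j)%N) /\ (forall k, k \in s2 -> (j < k)%N).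
Proof.
move=> S; split.
- move=> k kin; move: S; case/splitPr: kin => a b S; rewrite -catA /= in S.
  have /= := (cat_sorted2 S).2 => P.
  have := order_path_min ltn_trans P; move/allP; apply.
  by rewrite mem_cat inE eqxx orbT.
- move=> k kin; have /= := (cat_sorted2 S).2 => P.
  by have := order_path_min ltn_trans P => /allP; apply.
Qed.

Lemma enum_split (j : 'I_n) : exists l1 l2, enum 'I_n = l1 ++ j :: l2 /\
   (forall k, k \in l1 -> (k < j)%N) /\ (forall k, k \in l2 -> (j < k)%N).
Proof.
have S := iota_ltn_sorted 0 n; rewrite -val_enum_ord in S.
have := mem_enum 'I_n j; rewrite inE => /splitPr E.
move: E S; case => l1 l2 S.
exists l1, l2; split => //.
rewrite map_cat /= in S; have [H1 H2] := sorted_split S.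
split => k kin.
- by apply: H1; apply: map_f.
- by apply: H2; apply: map_f.
Qed.

Fixpoint lexlt (s t : seq nat) : bool :=
  match s, t with
  | x :: s', y :: t' => (x < y)%N || ((x == y) && lexlt s' t')
  | _, _ => false
  end.

Lemma lexlt_irr s : lexlt s s = false.
Proof. by elim: s => //= x s ->; rewrite ltnn eqxx. Qed.

Lemma lexlt_trans s t u : lexlt s t -> lexlt t u -> lexlt s u.
Proof.
elim: s t u => [|x s IH] [|y t] [|z u] //=.
case/orP => [xy|/andP[/eqP-> st]]; case/orP => [yz|/andP[/eqP<- tu]].
- by rewrite (ltn_trans xy yz).
- by rewrite xy.
- by rewrite yz.
- by rewrite eqxx (IH _ _ st tu) orbT.
Qed.

Lemma lexlt_total s t : size s = size t -> s <> t -> lexlt s t || lexlt t s.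
Proof.
elim: s t => [|x s IH] [|y t] //= [E] ne.
case: (ltngtP x y) => [xy|xy|xy]; [by [] | by rewrite orbT | ].
subst y; rewrite ?ltnn ?eqxx /=; apply: IH => // st; apply: ne; by rewrite st.
Qed.

Definition lexle s t := (s == t) || lexlt s t.



Lemma lex_cancel (T : eqType) (l : seq T) (a b a0 b0 : T -> nat) :
  lexle (map a l) (map a0 l) -> lexle (map b l) (map b0 l) ->
  (forall o, (a o + b o = a0 o + b0 o)%N) ->
  map a l = map a0 l /\ map b l = map b0 l.
Proof.
elim: l => [|o l IH] //= H1 H2 E.
have E0 := E o.
have : (a o <= a0 o)%N /\ (b o <= b0 o)%N.
  move: H1 H2; rewrite /lexle /= !eqseq_cons.
  by case/orP => [/andP[/eqP-> _]|/orP[/ltnW->|/andP[/eqP->_]]];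
     case/orP => [/andP[/eqP-> _]|/orP[/ltnW->|/andP[/eqP->_]]].
case=> la lb.
have ea : a o = a0 o by lia.
have eb : b o = b0 o by lia.
have H1' : lexle (map a l) (map a0 l).
  move: H1; rewrite /lexle /= eqseq_cons ea eqxx ltnn /=.
  by [].
have H2' : lexle (map b l) (map b0 l).
  move: H2; rewrite /lexle /= eqseq_cons eb eqxx ltnn /=.
  by [].
have [-> ->] := IH H1' H2' E.
by rewrite ea eb.
Qed.

Definition ekv (a : expo n) (o : option 'I_n) : nat :=
  match o with None => edeg a | Some i => a i end.
Definition ekeyl : seq (option 'I_n) := None :: map Some (enum 'I_n).
Definition ekey (a : expo n) : seq nat := map (ekv a) ekeyl.
Definition elt (a b : expo n) : bool := lexlt (ekey a) (ekey b).

Lemma ekey_inj a b : ekey a = ekey b -> a = b.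
Proof.
move=> E; apply/ffunP => i.
have : {in ekeyl, ekv a =1 ekv b} by apply/eq_in_map.
move/(_ (Some i)); apply.
by rewrite /ekeyl inE map_f ?mem_enum ?orbT.
Qed.

Lemma elt_irr a : elt a a = false.
Proof. exact: lexlt_irr. Qed.

Lemma elt_trans a b c : elt a b -> elt b c -> elt a c.
Proof. exact: lexlt_trans. Qed.

Lemma elt_total a b : a <> b -> elt a b || elt b a.
Proof.
move=> ne; apply: lexlt_total; first by rewrite /ekey !size_map.
by move/ekey_inj.
Qed.

Lemma elt_deg a b : (edeg a < edeg b)%N -> elt a b.
Proof. by move=> H; rewrite /elt /ekey /= H. Qed.

Lemma elt_deg_le a b : elt a b -> (edeg a <= edeg b)%N.
Proof. by rewrite /elt /ekey /= => /orP[/ltnW|/andP[/eqP-> _]]. Qed.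

Definition ele a b := (a == b) || elt a b.

Lemma ele_deg a b : ele a b -> (edeg a <= edeg b)%N.
Proof. by case/orP => [/eqP->//|/elt_deg_le]. Qed.

Lemma ele_lexle a b : ele a b -> lexle (ekey a) (ekey b).
Proof. by case/orP => [/eqP->|H]; rewrite /lexle ?eqxx //; rewrite /elt in H; rewrite H orbT. Qed.

Lemma elt_cancel a b a0 b0 : ele a a0 -> ele b b0 -> eadd a b = eadd a0 b0 ->
  a = a0 /\ b = b0.
Proof.
move=> H1 H2 E.
have E' : forall o, (ekv a o + ekv b o = ekv a0 o + ekv b0 o)%N.
  case=> [i|] /=.
  - by have := congr1 (fun f : expo n => f i) E; rewrite !ffunE.
  - by rewrite -!edeg_add E.
have [k1 k2] := lex_cancel (ele_lexle H1) (ele_lexle H2) E'.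
by split; apply: ekey_inj.
Qed.

Lemma exmax (l : seq (expo n)) : l != [::] ->
  exists2 m, m \in l & forall y, y \in l -> elt m y = false.
Proof.
elim: l => [|y l IH] // _.
case: (altP (l =P [::])) => [->|ne].
  by exists y; rewrite ?inE // => z; rewrite inE => /eqP->; rewrite elt_irr.
have [m ml Hm] := IH ne.
case: (boolP (elt m y)) => my.
- exists y; first by rewrite inE eqxx.
  move=> z; rewrite inE => /orP[/eqP->|zl]; first by rewrite elt_irr.
  apply/negP => yz; by have := elt_trans my yz; rewrite Hm.
- exists m; first by rewrite inE ml orbT.
  by move=> z; rewrite inE => /orP[/eqP->|/Hm]; [apply/negbTE|].
Qed.

Lemma elt_not a b : elt a b = false -> ele b a.
Proof.
move=> H; rewrite /ele; case: (altP (b =P a)) => //= ne.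
by have := elt_total (elimN eqP ne); rewrite H orbF.
Qed.

Lemma edec (a : expo n) (j : 'I_n) : (0 < a j)%N ->
  exists (j' : 'I_n) (a' : expo n), [/\ (j <= j')%N, elast j' a' & a = eadd a' (eunit j')].
Proof.
move=> Hj.
case: (@arg_maxnP _ j (fun k => 0 < a k)%N (fun k => nat_of_ord k) Hj) => j' Pj' Mx.
exists j', [ffun k => (a k - (k == j'))%N]; split.
- exact: Mx.
- move=> k lt; rewrite ffunE.
  case: (posnP (a k)) => [-> //|pk].
  by have /= H := Mx k pk; move: lt; rewrite ltnNge H.
- apply/ffunP => k; rewrite !ffunE.
  case: (altP (k =P j')) => [->|] /=; last by rewrite subn0 addn0.
  by rewrite subn1 addn1 prednK.
Qed.

Lemma ez_dec (a : expo n) : a <> ez -> exists (j' : 'I_n) (a' : expo n), elast j' a' /\ a = eadd a' (eunit j').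
Proof.
move=> ne.
have [j pj] : exists j, (0 < a j)%N.
  case: (boolP [exists k, 0 < a k]%N) => [/existsP//|].
  rewrite negb_exists => /forallP H; exfalso; apply: ne.
  by apply/ffunP => i; rewrite ffunE; have := H i; rewrite lt0n negbK => /eqP.
by have [j' [a' [_ H1 H2]]] := edec pj; exists j', a'.
Qed.

Lemma elast_dec (a : expo n) (i : 'I_n) : elast i a \/
  exists (j : 'I_n) (a' : expo n), [/\ (i < j)%N, elast j a' & a = eadd a' (eunit j)].
Proof.
case: (boolP [exists k : 'I_n, (i < k)%N && (0 < a k)%N]).
- case/existsP => k /andP[ik pk]; right.
  have [j' [a' [kj H1 H2]]] := edec pk; exists j', a'; split => //.
  exact: leq_trans ik kj.
- rewrite negb_exists => /forallP H; left => k ik.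
  by have := H k; rewrite ik /= lt0n negbK => /eqP.
Qed.

Lemma elast_add (a : expo n) (i j : 'I_n) : elast j a -> (i <= j)%N -> elast j (eadd a (eunit i)).
Proof.
move=> H ij k jk; rewrite !ffunE H //.
case: (altP (k =P i)) => [ki|] //=; subst k.
by move: (leq_trans jk ij); rewrite ltnn.
Qed.

Lemma elast_ez j : elast j ez.
Proof. by move=> k _; rewrite ffunE. Qed.

End Expo.
From Stdlib Require Import ClassicalEpsilon.
Import GRing.Theory.
Local Open Scope ring_scope.
Section Ring.
Variables (R A : pzRingType) (phi : {rmorphism R -> A}) (n : nat).
Variables (x : 'I_n -> A) (d : 'I_n -> 'I_n -> R) (sigma delta : 'I_n -> R -> R).
Hypothesis HPBW : skew_PBW phi x d.
Hypothesis Hsd : forall i r, x i * phi r = phi (sigma i r) * x i + phi (delta i r).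
Hypothesis Hinv : forall i j : 'I_n, (i < j)%N -> invertible_el (d i j).
Hypothesis Hrig : sigma_rigid sigma.
Hypothesis Hab : abelian_ring R.

Local Notation mon := (smon x).
Local Notation sp := (sigma_pow sigma).

Lemma smon_enum (a : expo n) : mon a = \prod_(i <- enum 'I_n) x i ^+ a i.
Proof. have E : index_enum 'I_n = enum 'I_n by rewrite enumT. by rewrite /smon E. Qed.

Lemma mon_ez : mon (ez n) = 1.
Proof. by rewrite /smon big1 // => i _; rewrite ffunE expr0. Qed.

Lemma mon_last (a : expo n) (j : 'I_n) : elast j a -> mon a * x j = mon (eadd a (eunit j)).
Proof.
move=> La.
have [l1 [l2 [E [H1 H2]]]] := enum_split j.
have U : uniq (l1 ++ j :: l2) by rewrite -E enum_uniq.
rewrite !smon_enum E !big_cat !big_cons /=.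
rewrite [\prod_(i <- l2) x i ^+ a i]big1_seq; last first.
  by move=> i /andP[_ /H2 /La] ->; rewrite expr0.
rewrite [\prod_(i <- l2) _]big1_seq; last first.
  move=> i /andP[_ il]; have ji := H2 _ il.
  rewrite !ffunE La //; case: (altP (i =P j)) => [E'|] //=.
  by move: ji; rewrite E' ltnn.
rewrite !mulr1 {2}/eadd ffunE /eunit ffunE eqxx addn1 exprSr mulrA; congr (_ * _); congr (_ * _).
apply: eq_big_seq => i il; rewrite !ffunE; have ij := H1 _ il.
case: (altP (i =P j)) => [E'|] //=; last by rewrite addn0.
by move: ij; rewrite E' ltnn.
Qed.

Lemma mon_unit (i : 'I_n) : mon (eunit i) = x i.
Proof.
have := mon_last (@elast_ez _ i); rewrite mon_ez mul1r => ->.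
congr mon; apply/ffunP => k; by rewrite !ffunE.
Qed.

Lemma eunit_neq (i : 'I_n) : eunit i != ez n.
Proof. apply/eqP => /(congr1 (fun f : expo n => f i)); by rewrite !ffunE eqxx. Qed.

Lemma indep2 (i : 'I_n) (p q p' q' : R) :
  phi p * x i + phi q = phi p' * x i + phi q' -> p = p' /\ q = q'.
Proof.
move=> E; have [_ _ Hind _ _] := HPBW.
pose c := fun m : expo n => if m == eunit i then p - p' else q - q'.
have U : uniq [:: eunit i; ez n] by rewrite /= inE eunit_neq.
have S : \sum_(m <- [:: eunit i; ez n]) phi (c m) * mon m = 0.
  rewrite !big_cons big_nil addr0 /c eqxx eq_sym (negbTE (eunit_neq i)).
  rewrite mon_unit mon_ez mulr1 !rmorphB /= mulrBl.
  by rewrite addrACA -opprD E subrr.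
have := Hind _ _ U S (eunit i); rewrite inE eqxx /c eqxx => /(_ isT)/eqP.
rewrite subr_eq0 => /eqP ->; split => //.
have := Hind _ _ U S (ez n); rewrite !inE eqxx orbT /c eq_sym (negbTE (eunit_neq i)).
by move=> /(_ isT)/eqP; rewrite subr_eq0 => /eqP.
Qed.

Lemma sig_add (i : 'I_n) (a b : R) : sigma i (a + b) = sigma i a + sigma i b /\
   delta i (a + b) = delta i a + delta i b.
Proof.
apply: (@indep2 i); rewrite -Hsd !rmorphD /= mulrDr !Hsd mulrDl.
by rewrite addrACA.
Qed.

Lemma sig_mul (i : 'I_n) (a b : R) : sigma i (a * b) = sigma i a * sigma i b /\
   delta i (a * b) = sigma i a * delta i b + delta i a * b.
Proof.
apply: (@indep2 i); rewrite -Hsd !rmorphM /= mulrA Hsd mulrDl -mulrA Hsd.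
by rewrite mulrDr !rmorphD !rmorphM /= mulrA addrA.
Qed.

Lemma sig_one (i : 'I_n) : sigma i 1 = 1 /\ delta i 1 = 0.
Proof.
apply: (@indep2 i); rewrite -Hsd rmorph1 rmorph0 mulr1 mul1r addr0 //.
Qed.

Lemma sig0 (i : 'I_n) : sigma i 0 = 0.
Proof.
have H := (sig_add i 0 0).1; rewrite addr0 in H.
by apply: (addrI (sigma i 0)); rewrite addr0 -H.
Qed.

Lemma sigN (i : 'I_n) (a : R) : sigma i (- a) = - sigma i a.
Proof.
apply/eqP; rewrite -subr_eq0 opprK -(sig_add i (-a) a).1 addNr sig0 //.
Qed.

Lemma sigB (i : 'I_n) (a b : R) : sigma i (a - b) = sigma i a - sigma i b.
Proof. by rewrite (sig_add i a (-b)).1 sigN. Qed.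

Definition mh (f : R -> R) := [/\ forall u v, f (u * v) = f u * f v, f 1 = 1 & f 0 = 0].

Lemma mh_sig (i : 'I_n) : mh (sigma i).
Proof. by split; [move=> u v; exact: (sig_mul i u v).1 | exact: (sig_one i).1 | exact: sig0]. Qed.

Lemma mh_iter (k : nat) (f : R -> R) : mh f -> mh (iter k f).
Proof.
case=> H1 H2 H3; elim: k => [|k [IH1 IH2 IH3]]; first by split.
by split => /=; [move=> u v; rewrite IH1 H1 | rewrite IH2 H2 | rewrite IH3 H3].
Qed.

Definition Ff (b : expo n) := fun (i : 'I_n) (f : R -> R) => iter (b i) (sigma i) \o f.

Lemma mh_foldr (b : expo n) (l : seq 'I_n) : mh (foldr (Ff b) id l).
Proof.
elim: l => [|i l [IH1 IH2 IH3]] //=.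
have [G1 G2 G3] := mh_iter (b i) (mh_sig i).
by split; [move=> u v; rewrite /Ff /= IH1 G1 | rewrite /Ff /= IH2 G2 | rewrite /Ff /= IH3 G3].
Qed.

Lemma mh_sp (b : expo n) : mh (sp b).
Proof. exact: mh_foldr. Qed.

Lemma foldr_comp (b : expo n) (l : seq 'I_n) (z : R -> R) (r : R) : foldr (Ff b) z l r = foldr (Ff b) id l (z r).
Proof. by elim: l => //= i l IH; rewrite /Ff /= IH. Qed.

Lemma foldr_eq_in (b c : expo n) (l : seq 'I_n) (r : R) : (forall i, i \in l -> b i = c i) ->
  foldr (Ff b) id l r = foldr (Ff c) id l r.
Proof.
elim: l => //= i l IH H; rewrite /Ff /= IH ?H ?inE ?eqxx //.
by move=> k kl; apply: H; rewrite inE kl orbT.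
Qed.

Lemma foldr_zero (b : expo n) (l : seq 'I_n) (r : R) : (forall i, i \in l -> b i = 0%N) -> foldr (Ff b) id l r = r.
Proof.
elim: l => //= i l IH H; rewrite /Ff /= IH ?H ?inE ?eqxx //.
by move=> k kl; apply: H; rewrite inE kl orbT.
Qed.

Lemma sp_ez r : sp (ez n) r = r.
Proof. by rewrite /sigma_pow -/(Ff (ez n)) foldr_zero // => i _; rewrite ffunE. Qed.

Lemma sp_last (a : expo n) (j : 'I_n) (r : R) : elast j a -> sp (eadd a (eunit j)) r = sp a (sigma j r).
Proof.
move=> La.
have [l1 [l2 [E [H1 H2]]]] := enum_split j.
rewrite /sigma_pow -!/(Ff _) E !foldr_cat foldr_comp [in RHS]foldr_comp /= /Ff /=.
rewrite (@foldr_zero (eadd a (eunit j)) l2); last first.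
  move=> i il; have ji := H2 _ il; rewrite !ffunE La //.
  case: (altP (i =P j)) => [E'|] //=; by move: ji; rewrite E' ltnn.
rewrite (@foldr_zero a l2); last by move=> i /H2 /La.
rewrite {1}/eadd ffunE /eunit ffunE eqxx addn1 iterSr.
apply: foldr_eq_in => i il; rewrite !ffunE; have ij := H1 _ il.
case: (altP (i =P j)) => [E'|] //=; last by rewrite addn0.
by move: ij; rewrite E' ltnn.
Qed.

Lemma sp_unit (i : 'I_n) (r : R) : sp (eunit i) r = sigma i r.
Proof.
have := sp_last r (@elast_ez _ i); rewrite sp_ez => <-.
congr sp; apply/ffunP => k; by rewrite !ffunE.
Qed.

Lemma reduced (a : R) : a * a = 0 -> a = 0.
Proof. by move=> H; apply: (Hrig (alpha := ez n)); rewrite sp_ez. Qed.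

Lemma ab_ba (a b : R) : a * b = 0 -> b * a = 0.
Proof. by move=> H; apply: reduced; rewrite mulrA -(mulrA b) H mulr0 mul0r. Qed.

Lemma compat1 (a b : R) (m : expo n) : a * sp m b = 0 -> a * b = 0.
Proof.
move=> H; apply: ab_ba; apply: (Hrig (alpha := m)).
have [M _ _] := mh_sp m.
by rewrite M mulrA -(mulrA b) H mulr0 mul0r.
Qed.

Lemma compat2 (a b : R) (m : expo n) : a * b = 0 -> a * sp m b = 0.
Proof.
move=> H; apply: (Hrig (alpha := m)).
have [M _ _] := mh_sp m.
rewrite M -mulrA (mulrA (sp m b)) -M (ab_ba H).
by have [_ _ ->] := mh_sp m; rewrite mul0r mulr0.
Qed.

Lemma idem_fix (e : R) (i : 'I_n) : idempotent_el e -> sigma i e = e.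
Proof.
move=> He.
have h1 : e * (1 - e) = 0 by rewrite mulrBr mulr1 He subrr.
have h2 : (1 - e) * e = 0 by rewrite mulrBl mul1r He subrr.
have := compat2 (eunit i) h1; rewrite sp_unit sigB (sig_one i).1 mulrBr mulr1.
move/eqP; rewrite subr_eq0 => /eqP E1.
have := compat2 (eunit i) h2; rewrite sp_unit mulrBl mul1r.
move/eqP; rewrite subr_eq0 => /eqP E2.
by rewrite E2 -E1.
Qed.

Lemma idem_delta (e : R) (i : 'I_n) : idempotent_el e -> delta i e = 0.
Proof.
move=> He.
have D := (sig_mul i e e).2; rewrite He (idem_fix i He) -(Hab He (delta i e)) in D.
have : e * delta i e = 0.
  have := congr1 (fun z => e * z) D; rewrite mulrDr !mulrA He => H.
  by apply: (addrI (e * delta i e)); rewrite addr0 -H.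
by move=> H; rewrite D H addr0.
Qed.

Lemma expand (z : A) : exists s c, z = \sum_(m <- s) phi (c m) * mon m.
Proof. by have [_ Hs _ _ _] := HPBW; apply: Hs. Qed.

Lemma central_phi (e : R) : idempotent_el e -> forall z : A, phi e * z = z * phi e.
Proof.
move=> He z; have [s [c ->]] := expand z.
apply: commr_sum => m _; apply: commrM.
  by rewrite /GRing.comm -!rmorphM /= Hab.
apply: commr_prod => i _; apply: commrX.
by rewrite /GRing.comm Hsd idem_fix // idem_delta // rmorph0 addr0.
Qed.

Lemma sum_sub (T : eqType) (s1 s : seq T) (F : T -> A) : uniq s1 -> uniq s ->
  {subset s1 <= s} ->
  \sum_(m <- s1) F m = \sum_(m <- s) (if m \in s1 then F m else 0).
Proof.
move=> U1 U Sub; rewrite -big_mkcond -big_filter; apply: perm_big.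
apply: uniq_perm => //; first exact: filter_uniq.
by move=> m; rewrite mem_filter; case: (boolP (m \in s1)) => //= /Sub ->.
Qed.

Lemma sum_ext (T : eqType) (s1 s2 : seq T) (G : T -> A) : uniq s1 -> uniq s2 ->
  (forall m, m \notin s1 -> G m = 0) -> (forall m, m \notin s2 -> G m = 0) ->
  \sum_(m <- s1) G m = \sum_(m <- s2) G m.
Proof.
move=> U1 U2 H1 H2; set s := undup (s1 ++ s2).
have U : uniq s by apply: undup_uniq.
rewrite (sum_sub G U1 U) ?(sum_sub G U2 U); first last.
- by move=> m mi; rewrite mem_undup mem_cat mi ?orbT.
- by move=> m mi; rewrite mem_undup mem_cat mi ?orbT.
apply: eq_bigr => m _.
case: (boolP (m \in s1)) => m1; case: (boolP (m \in s2)) => m2 //.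
- by rewrite H2.
- by rewrite H1.
Qed.

Lemma dedup_rep (s : seq (expo n)) (c : expo n -> R) : exists s' c', uniq s' /\
  \sum_(m <- s) phi (c m) * mon m = \sum_(m <- s') phi (c' m) * mon m.
Proof.
elim: s => [|m s [s' [c' [U E]]]]; first by exists [::], c.
rewrite big_cons E.
case: (boolP (m \in s')) => ms.
- exists s', (fun k => if k == m then c m + c' k else c' k); split => //.
  rewrite (bigD1_seq m) //= [in RHS](bigD1_seq m) //= eqxx rmorphD mulrDl -addrA.
  congr (_ + _); congr (_ + _); apply: eq_bigr => k /negbTE -> //.
- exists (m :: s'), (fun k => if k == m then c m else c' k); split; first by rewrite /= ms U.
  rewrite big_cons eqxx; congr (_ + _); apply: eq_big_seq => k ks.
  have : k != m by apply/eqP => km; rewrite -km ks in ms.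
  by move/negbTE ->.
Qed.

Lemma rep_ex (z : A) : exists sc : seq (expo n) * (expo n -> R),
  uniq sc.1 /\ z = \sum_(m <- sc.1) phi (sc.2 m) * mon m.
Proof.
have [s [c E]] := expand z; have [s' [c' [U E']]] := dedup_rep s c.
by exists (s', c'); rewrite E E'.
Qed.

Definition rep (z : A) := proj1_sig (constructive_indefinite_description _ (rep_ex z)).
Definition supp (z : A) := (rep z).1.
Definition coef (z : A) (m : expo n) : R := if m \in supp z then (rep z).2 m else 0.

Lemma rep_spec z : uniq (supp z) /\ z = \sum_(m <- supp z) phi ((rep z).2 m) * mon m.
Proof. exact: (proj2_sig (constructive_indefinite_description _ (rep_ex z))). Qed.

Lemma uniq_coef (s1 s2 : seq (expo n)) (c1 c2 : expo n -> R) : uniq s1 -> uniq s2 ->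
  \sum_(m <- s1) phi (c1 m) * mon m = \sum_(m <- s2) phi (c2 m) * mon m ->
  forall m, (if m \in s1 then c1 m else 0) = (if m \in s2 then c2 m else 0).
Proof.
move=> U1 U2 E; set s := undup (s1 ++ s2).
have U : uniq s by apply: undup_uniq.
pose c1' m := if m \in s1 then c1 m else 0.
pose c2' m := if m \in s2 then c2 m else 0.
have Hs : forall (s0 : seq (expo n)) c, uniq s0 -> {subset s0 <= s} ->
   \sum_(m <- s0) phi (c m) * mon m = \sum_(m <- s) phi (if m \in s0 then c m else 0) * mon m.
  move=> s0 c U0 Sub; rewrite (sum_sub _ U0 U Sub); apply: eq_bigr => m _.
  by case: (m \in s0); rewrite ?rmorph0 ?mul0r.
rewrite (Hs s1) // ?(Hs s2) // in E; first last.
- by move=> m mi; rewrite mem_undup mem_cat mi ?orbT.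
- by move=> m mi; rewrite mem_undup mem_cat mi ?orbT.
have Z : \sum_(m <- s) phi (c1' m - c2' m) * mon m = 0.
  rewrite (eq_bigr (fun m => phi (c1' m) * mon m - phi (c2' m) * mon m)).
    by rewrite sumrB E subrr.
  by move=> m _; rewrite rmorphB mulrBl.
have [_ _ Hind _ _] := HPBW.
move=> m; case: (boolP (m \in s)) => ms.
  by have /eqP := Hind _ _ U Z m ms; rewrite subr_eq0 => /eqP.
have : m \notin s1 /\ m \notin s2.
  by move: ms; rewrite mem_undup mem_cat negb_or => /andP.
by case=> /negbTE -> /negbTE ->.
Qed.

Lemma coef_rep (z : A) (s : seq (expo n)) (c : expo n -> R) : uniq s ->
  z = \sum_(m <- s) phi (c m) * mon m -> forall m, coef z m = if m \in s then c m else 0.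
Proof.
move=> U E m; have [U' E'] := rep_spec z.
apply: (uniq_coef U' U); by rewrite -E -E'.
Qed.

Lemma supp_coef z m : coef z m != 0 -> m \in supp z.
Proof. by rewrite /coef; case: (m \in supp z); rewrite ?eqxx. Qed.

Lemma expand_sub (z : A) (s : seq (expo n)) : uniq s ->
  (forall m, coef z m != 0 -> m \in s) -> z = \sum_(m <- s) phi (coef z m) * mon m.
Proof.
move=> U H; have [U' E'] := rep_spec z.
rewrite {1}E' (eq_big_seq (fun m => phi (coef z m) * mon m)); last first.
  by move=> m ms; rewrite /coef ms.
apply: sum_ext => // m mn.
- by rewrite /coef (negbTE mn) rmorph0 mul0r.
- case: (altP (coef z m =P 0)) => [->|/H]; first by rewrite rmorph0 mul0r.
  by rewrite (negbTE mn).
Qed.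

Lemma expand_supp (z : A) : z = \sum_(m <- supp z) phi (coef z m) * mon m.
Proof. by apply: expand_sub; [exact: (rep_spec z).1 | exact: supp_coef]. Qed.

Lemma coef_mon (b m : expo n) : coef (mon b) m = (m == b)%:R.
Proof.
have E : mon b = \sum_(k <- [:: b]) phi ((fun _ => 1) k) * mon k.
  by rewrite big_cons big_nil addr0 rmorph1 mul1r.
by rewrite (coef_rep _ E) // inE; case: (m == b).
Qed.

Lemma coef_add (y z : A) m : coef (y + z) m = coef y m + coef z m.
Proof.
set s := undup (supp y ++ supp z).
have U : uniq s by apply: undup_uniq.
have Hy : y = \sum_(k <- s) phi (coef y k) * mon k.
  by apply: expand_sub => // k /supp_coef ky; rewrite mem_undup mem_cat ky.
have Hz : z = \sum_(k <- s) phi (coef z k) * mon k.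
  by apply: expand_sub => // k /supp_coef kz; rewrite mem_undup mem_cat kz orbT.
have E : y + z = \sum_(k <- s) phi (coef y k + coef z k) * mon k.
  rewrite {1}Hy {1}Hz -big_split /=; apply: eq_bigr => k _.
  by rewrite rmorphD mulrDl.
rewrite (coef_rep U E); case: (boolP (m \in s)) => // ms.
have Ny : coef y m = 0.
  apply/eqP; apply: contraNT ms => /supp_coef ky; by rewrite mem_undup mem_cat ky.
have Nz : coef z m = 0.
  apply/eqP; apply: contraNT ms => /supp_coef kz; by rewrite mem_undup mem_cat kz orbT.
by rewrite Ny Nz addr0.
Qed.

Lemma coef0 m : coef 0 m = 0.
Proof. have := coef_add 0 0 m; rewrite addr0 => H. by apply: (addrI (coef 0 m)); rewrite addr0 -H. Qed.

Lemma coef_phiM (r : R) (z : A) m : coef (phi r * z) m = r * coef z m.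
Proof.
have U := (rep_spec z).1.
have E : phi r * z = \sum_(k <- supp z) phi (r * coef z k) * mon k.
  rewrite {1}(expand_supp z) mulr_sumr; apply: eq_bigr => k _.
  by rewrite rmorphM mulrA.
rewrite (coef_rep U E); case: (boolP (m \in supp z)) => // ms.
by rewrite /coef (negbTE ms) mulr0.
Qed.

Lemma coefN (z : A) m : coef (- z) m = - coef z m.
Proof. by rewrite -mulN1r -(rmorphN1 phi) coef_phiM mulN1r. Qed.

Lemma coefB (y z : A) m : coef (y - z) m = coef y m - coef z m.
Proof. by rewrite coef_add coefN. Qed.

Lemma coef_sum (I : Type) (l : seq I) (F : I -> A) m :
  coef (\sum_(i <- l) F i) m = \sum_(i <- l) coef (F i) m.
Proof.
elim: l => [|i l IH]; first by rewrite !big_nil coef0.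
by rewrite !big_cons coef_add IH.
Qed.

Lemma coef_eq0 (z : A) : (forall m, coef z m = 0) -> z = 0.
Proof.
move=> H; rewrite (expand_supp z) big1 // => m _; by rewrite H rmorph0 mul0r.
Qed.
Definition Fl (k : nat) (z : A) := forall m, (k <= edeg m)%N -> coef z m = 0.

Lemma Fl0 k : Fl k 0.
Proof. by move=> m _; rewrite coef0. Qed.
Lemma Fl_add k y z : Fl k y -> Fl k z -> Fl k (y + z).
Proof. by move=> Hy Hz m km; rewrite coef_add Hy ?Hz ?addr0. Qed.
Lemma FlN k z : Fl k z -> Fl k (- z).
Proof. by move=> Hz m km; rewrite coefN Hz ?oppr0. Qed.
Lemma FlB k y z : Fl k y -> Fl k z -> Fl k (y - z).
Proof. by move=> Hy Hz; apply: Fl_add => //; apply: FlN. Qed.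
Lemma Fl_phiM k r z : Fl k z -> Fl k (phi r * z).
Proof. by move=> Hz m km; rewrite coef_phiM Hz ?mulr0. Qed.
Lemma Fl_mono k k' z : (k <= k')%N -> Fl k z -> Fl k' z.
Proof. by move=> kk Hz m km; apply: Hz; apply: leq_trans km. Qed.
Lemma Fl_mon k b : (edeg b < k)%N -> Fl k (mon b).
Proof.
move=> bk m km; rewrite coef_mon; case: (altP (m =P b)) => // E.
by move: bk; rewrite -E ltnNge km.
Qed.
Lemma Fl_sum (I : Type) k (l : seq I) (F : I -> A) :
  (forall i, Fl k (F i)) -> Fl k (\sum_(i <- l) F i).
Proof.
move=> H; elim: l => [|i l IH]; first by rewrite big_nil; apply: Fl0.
by rewrite big_cons; apply: Fl_add.
Qed.

Lemma Fl_mulr k k' (y z : A) : (forall m, (edeg m < k)%N -> Fl k' (mon m * y)) ->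
  Fl k z -> Fl k' (z * y).
Proof.
move=> H Hz; rewrite (expand_supp z) mulr_suml; apply: Fl_sum => m.
case: (altP (coef z m =P 0)) => [->|nz]; first by rewrite rmorph0 !mul0r; apply: Fl0.
rewrite -mulrA; apply: Fl_phiM; apply: H.
by rewrite ltnNge; apply/negP => /Hz; apply/eqP.
Qed.

Definition eqv k (u v : A) := Fl k (u - v).
Lemma eqv_refl k u : eqv k u u.
Proof. by rewrite /eqv subrr; apply: Fl0. Qed.
Lemma eqv_trans k u v w : eqv k u v -> eqv k v w -> eqv k u w.
Proof.
by move=> H1 H2; have := Fl_add H1 H2; rewrite /eqv addrA subrK.
Qed.
Lemma eqv_eq k u v : u = v -> eqv k u v.
Proof. move=> ->; exact: eqv_refl. Qed.
Lemma eqv_diff k u v w : u - v = w -> Fl k w -> eqv k u v.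
Proof. by move=> E; rewrite /eqv E. Qed.
Lemma eqv_Fl k u v : eqv k u v -> Fl k v -> Fl k u.
Proof. by move=> H Hv; have := Fl_add H Hv; rewrite subrK. Qed.
Lemma eqv_phiM k r u v : eqv k u v -> eqv k (phi r * u) (phi r * v).
Proof. by move=> H; rewrite /eqv -mulrBr; apply: Fl_phiM. Qed.
Lemma eqv_mono k k' u v : (k <= k')%N -> eqv k u v -> eqv k' u v.
Proof. exact: Fl_mono. Qed.

Definition rinv (c : R) := exists c', c * c' = 1.
Lemma rinv1 : rinv 1.
Proof. by exists 1; rewrite mulr1. Qed.
Lemma rinvM c1 c2 : rinv c1 -> rinv c2 -> rinv (c1 * c2).
Proof. by case=> u1 H1 [u2 H2]; exists (u2 * u1); rewrite mulrA -(mulrA c1) H2 mulr1. Qed.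
Lemma rinv_cancel c a : rinv c -> a * c = 0 -> a = 0.
Proof. by case=> u H E; rewrite -(mulr1 a) -H mulrA E mul0r. Qed.

Definition Pm (a : expo n) := forall r, eqv (edeg a) (mon a * phi r) (phi (sp a r) * mon a).
Definition Qm (a : expo n) := forall i, exists c, rinv c /\
   eqv (edeg a).+1 (mon a * x i) (phi c * mon (eadd a (eunit i))).
Definition CR k := forall z, Fl k z -> forall r, Fl k (z * phi r).
Definition CX k := forall z, Fl k z -> forall i, Fl k.+1 (z * x i).

Lemma CR_of k : (forall a, (edeg a < k)%N -> Pm a) -> CR k.
Proof.
move=> H z Hz r; apply: (Fl_mulr _ Hz) => m mk.
apply: (eqv_Fl (Fl_mono (ltnW mk) (H m mk r))).
by apply: Fl_phiM; apply: Fl_mon.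
Qed.

Lemma CX_of k : (forall a, (edeg a < k)%N -> Qm a) -> CX k.
Proof.
move=> H z Hz i; apply: (Fl_mulr _ Hz) => m mk.
have [c [_ E]] := H m mk i.
have kk : ((edeg m).+1 <= k.+1)%N by rewrite ltnS ltnW.
apply: (eqv_Fl (Fl_mono kk E)).
apply: Fl_phiM; apply: Fl_mon; by rewrite edeg_add edeg_unit addn1 ltnS.
Qed.

Lemma edeg_dec (a' : expo n) (j : 'I_n) : edeg (eadd a' (eunit j)) = (edeg a').+1.
Proof. by rewrite edeg_add edeg_unit addn1. Qed.

Lemma PQ_all k : forall a, (edeg a < k)%N -> Pm a /\ Qm a.
Proof.
elim: k => [//|k IH] a; rewrite ltnS leq_eqVlt => /orP[/eqP Ek|/IH //].
have IHP : forall b, (edeg b < k)%N -> Pm b by move=> b /IH [].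
have IHQ : forall b, (edeg b < k)%N -> Qm b by move=> b /IH [].
have CRk := CR_of IHP.
have CXk := CX_of IHQ.
split.
-
  move=> r.
  case: (altP (a =P ez n)) => [->|/eqP ne].
    by rewrite mon_ez sp_ez mul1r mulr1; apply: eqv_refl.
  have [j [a' [La E]]] := ez_dec ne; subst a.
  rewrite edeg_dec in Ek; subst k.
  rewrite -(mon_last La) (sp_last _ La).
  have [Pa' _] := IH a' (ltnSn _).
  have CXa' := CX_of (fun b (h : (edeg b < edeg a')%N) => (IH b (ltnW h)).2).
  set t := sigma j r; set u := delta j r; set s := sp a' t.
  apply: (@eqv_trans _ _ (mon a' * phi t * x j)).
    apply: (@eqv_diff _ _ _ (mon a' * phi u)).
      by rewrite -mulrA Hsd mulrDr mulrA addrAC subrr add0r.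
    by rewrite edeg_dec; apply: CRk; apply: Fl_mon.
  apply: (@eqv_diff _ _ _ ((mon a' * phi t - phi s * mon a') * x j)).
    by rewrite mulrBl mulrA.
  rewrite edeg_dec; apply: CXa'; exact: Pa'.
-
  move=> i.
  case: (elast_dec a i) => [La|[j [a' [ij La E]]]].
    exists 1; split; first exact: rinv1.
    by rewrite rmorph1 mul1r (mon_last La); apply: eqv_refl.
  subst a; rewrite edeg_dec in Ek; subst k.
  have [Pa' Qa'] := IH a' (ltnSn _).
  have CXa' := CX_of (fun b (h : (edeg b < edeg a')%N) => (IH b (ltnW h)).2).
  have [c1 [rc1 E1]] := Qa' i.
  have [_ _ _ _ Hiv] := HPBW.
  have [_ [r0 [rs Exy]]] := Hiv i j.
  set D := phi (d i j) in Exy.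
  set Z := phi r0 + \sum_(k < n) phi (rs k) * x k in Exy.
  set s := sp a' (d i j).
  exists (s * c1); split.
    apply: rinvM => //.
    have [u [_ Hu]] := Hinv ij.
    exists (sp a' u); have [M O _] := mh_sp a'.
    by rewrite /s -M Hu O.
  set N := mon (eadd a' (eunit i)).
  have EN : mon (eadd (eadd a' (eunit j)) (eunit i)) = N * x j.
    rewrite /N (mon_last (elast_add La (ltnW ij))).
    by congr mon; rewrite -!eaddA (eaddC (eunit j)).
  rewrite EN -(mon_last La).
  have EYX : x j * x i = D * x i * x j + Z by rewrite -Exy addrC subrK.
  apply: (@eqv_trans _ _ (mon a' * D * x i * x j)).
    apply: (@eqv_diff _ _ _ (mon a' * Z)).
      by rewrite -mulrA EYX mulrDr !mulrA addrAC subrr add0r.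
    have CXk1 := CX_of IHQ.
    rewrite edeg_dec /Z mulrDr; apply: Fl_add.
      by apply: Fl_mono (leqnSn _) _; apply: CRk; apply: Fl_mon.
    rewrite mulr_sumr; apply: Fl_sum => k0; rewrite mulrA.
    by apply: CXk1; apply: CRk; apply: Fl_mon.
  have CXk1 := CX_of IHQ.
  apply: (@eqv_trans _ _ (phi s * mon a' * x i * x j)).
    apply: (@eqv_diff _ _ _ ((mon a' * D - phi s * mon a') * x i * x j)).
      by rewrite !mulrBl.
    rewrite edeg_dec; apply: CXk1; apply: CXa'; exact: Pa'.
  apply: (@eqv_diff _ _ _ (phi s * ((mon a' * x i - phi c1 * N) * x j))).
    by rewrite rmorphM !mulrBl !mulrBr !mulrA.
  rewrite edeg_dec; apply: Fl_phiM; apply: CXk1; exact: E1.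
Qed.

Lemma Pm_all a : Pm a.
Proof. exact: (PQ_all (ltnSn (edeg a))).1. Qed.
Lemma Qm_all a : Qm a.
Proof. exact: (PQ_all (ltnSn (edeg a))).2. Qed.
Lemma CR_all k : CR k.
Proof. by apply: CR_of => b _; apply: Pm_all. Qed.
Lemma CX_all k : CX k.
Proof. by apply: CX_of => b _; apply: Qm_all. Qed.

Lemma expo_ind (P : expo n -> Prop) : P (ez n) ->
  (forall a j, elast j a -> P a -> P (eadd a (eunit j))) -> forall a, P a.
Proof.
move=> H0 HS a.
suff: forall k a, (edeg a < k)%N -> P a by move/(_ _ a (ltnSn _)).
elim=> [//|k IH] {}a.
case: (altP (a =P ez n)) => [->//|/eqP ne].
have [j [a' [La E]]] := ez_dec ne; subst a.
rewrite edeg_dec ltnS => h; apply: HS => //; exact: IH.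
Qed.

Lemma Fl_mul_mon b : forall k z, Fl k z -> Fl (k + edeg b) (z * mon b).
Proof.
elim/expo_ind: b => [|a j La IH] k z Hz.
  by rewrite mon_ez mulr1 edeg_ez addn0.
rewrite -(mon_last La) mulrA edeg_dec addnS; apply: CX_all; exact: IH.
Qed.

Lemma prod_mon b : forall a, exists c, rinv c /\
  eqv (edeg a + edeg b) (mon a * mon b) (phi c * mon (eadd a b)).
Proof.
elim/expo_ind: b => [|b j Lb IH] a.
  exists 1; split; first exact: rinv1.
  by rewrite mon_ez mulr1 rmorph1 mul1r eadd0; apply: eqv_refl.
have [c1 [r1 E1]] := IH a.
have [c2 [r2 E2]] := Qm_all (eadd a b) j.
exists (c1 * c2); split; first exact: rinvM.
rewrite -(mon_last Lb) edeg_dec addnS mulrA.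
apply: (@eqv_trans _ _ (phi c1 * mon (eadd a b) * x j)).
  apply: (@eqv_diff _ _ _ ((mon a * mon b - phi c1 * mon (eadd a b)) * x j)).
    by rewrite mulrBl.
  exact: CX_all.
rewrite -mulrA rmorphM -mulrA eaddA; apply: eqv_phiM.
by rewrite edeg_add in E2.
Qed.

Lemma step1 (a b g : expo n) (r : R) : (edeg a + edeg b <= edeg g)%N ->
  coef (mon a * (phi r * mon b)) g = sp a r * coef (mon a * mon b) g.
Proof.
move=> H.
have D : Fl (edeg a + edeg b) ((mon a * phi r - phi (sp a r) * mon a) * mon b).
  apply: Fl_mul_mon; exact: Pm_all.
have := D g H; rewrite mulrBl coefB -!mulrA coef_phiM => /eqP.
by rewrite subr_eq0 => /eqP.
Qed.

Lemma step2 (a b g : expo n) : (edeg a + edeg b <= edeg g)%N ->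
  exists2 c, rinv c & coef (mon a * mon b) g = c * (g == eadd a b)%:R.
Proof.
move=> H; have [c [rc E]] := prod_mon b a; exists c => //.
have := E g H; rewrite coefB coef_phiM coef_mon => /eqP.
by rewrite subr_eq0 => /eqP.
Qed.

Lemma sum_pick (T : eqType) (s : seq T) (a : T) (F : T -> A) : uniq s -> a \in s ->
  \sum_(i <- s) (if i == a then F i else 0) = F a.
Proof.
move=> U ai; rewrite (bigD1_seq a) //= eqxx big1 ?addr0 //.
by move=> i /negbTE ->.
Qed.

Lemma sum_pickR (T : eqType) (s : seq T) (a : T) (F : T -> R) : uniq s -> a \in s ->
  \sum_(i <- s) (if i == a then F i else 0) = F a.
Proof.
move=> U ai; rewrite (bigD1_seq a) //= eqxx big1 ?addr0 //.
by move=> i /negbTE ->.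
Qed.

Lemma lead (f h : A) (a0 b0 : expo n) :
  (forall a, elt a0 a -> coef f a = 0) -> (forall b, elt b0 b -> coef h b = 0) ->
  coef (f * h) (eadd a0 b0) =
    coef f a0 * sp a0 (coef h b0) * coef (mon a0 * mon b0) (eadd a0 b0).
Proof.
move=> Hf Hh; set g := eadd a0 b0.
set sf := undup (a0 :: supp f); set sh := undup (b0 :: supp h).
have Uf : uniq sf by apply: undup_uniq.
have Uh : uniq sh by apply: undup_uniq.
have Ef : f = \sum_(a <- sf) phi (coef f a) * mon a.
  apply: expand_sub => // a /supp_coef H; by rewrite mem_undup inE H orbT.
have Eh : h = \sum_(b <- sh) phi (coef h b) * mon b.
  apply: expand_sub => // b /supp_coef H; by rewrite mem_undup inE H orbT.
have a0f : a0 \in sf by rewrite mem_undup inE eqxx.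
have b0h : b0 \in sh by rewrite mem_undup inE eqxx.
rewrite {1}Ef {1}Eh mulr_suml coef_sum.
set V := coef f a0 * sp a0 (coef h b0) * coef (mon a0 * mon b0) g.
have Z : forall a b r, ele a a0 -> ele b b0 -> (a != a0) || (b != b0) ->
    coef (mon a * (phi r * mon b)) g = 0.
  move=> a b r la lb nab.
  have dg : (edeg a + edeg b <= edeg g)%N by rewrite /g edeg_add leq_add ?ele_deg.
  rewrite step1 //; have [c _ ->] := step2 dg.
  case: (altP (g =P eadd a b)) => [E|_]; last by rewrite /= mulr0n !mulr0.
  have [Ea Eb] := elt_cancel la lb (esym E).
  by rewrite Ea Eb !eqxx in nab.
have T : forall a b, coef (phi (coef f a) * mon a * (phi (coef h b) * mon b)) g =
    if a == a0 then (if b == b0 then V else 0) else 0.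
  move=> a b; rewrite -mulrA coef_phiM.
  case: (altP (coef f a =P 0)) => [Ha|nza].
    rewrite Ha mul0r; case: (altP (a =P a0)) => [E|] //.
    by rewrite /V -E Ha; case: (b == b0); rewrite ?mul0r.
  have la : ele a a0 by apply: elt_not; apply/negP => /Hf; apply/eqP.
  case: (altP (coef h b =P 0)) => [Hb|nzb].
    rewrite Hb rmorph0 mul0r mulr0 coef0 mulr0.
    case: (a == a0) => //; case: (altP (b =P b0)) => // E.
    by rewrite /V -E Hb; have [_ _ ->] := mh_sp a0; rewrite mulr0 mul0r.
  have lb : ele b b0 by apply: elt_not; apply/negP => /Hh; apply/eqP.
  case: (altP (a =P a0)) => [Ea|na]; case: (altP (b =P b0)) => [Eb|nb].
  - by subst a b; rewrite step1 ?edeg_add // mulrA.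
  - by rewrite Z ?mulr0 // nb orbT.
  - by rewrite Z ?mulr0 // na.
  - by rewrite Z ?mulr0 // na.
rewrite (eq_bigr (fun a => if a == a0 then V else 0)); first exact: sum_pickR.
move=> a _; rewrite mulr_sumr coef_sum.
rewrite (eq_bigr (fun b => if a == a0 then (if b == b0 then V else 0) else 0)); last first.
  by move=> b _; rewrite T.
case: (a == a0); first exact: (sum_pickR (fun _ => V)).
by rewrite big1.
Qed.

Lemma lead_rinv (a0 b0 : expo n) : rinv (coef (mon a0 * mon b0) (eadd a0 b0)).
Proof.
have dg : (edeg a0 + edeg b0 <= edeg (eadd a0 b0))%N by rewrite edeg_add.
have [c rc ->] := step2 dg.
by rewrite eqxx mulr1.
Qed.

Lemma cprod_idem (l : seq R) : (forall y, y \in l -> idempotent_el y) ->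
  idempotent_el (\prod_(y <- l) y).
Proof.
elim: l => [|y l IH] H; first by rewrite /idempotent_el big_nil mulr1.
have Hy : idempotent_el y by apply: H; rewrite inE eqxx.
have Hl : idempotent_el (\prod_(z <- l) z).
  by apply: IH => z zl; apply: H; rewrite inE zl orbT.
rewrite /idempotent_el big_cons -mulrA (mulrA _ y) -(Hab Hy) -mulrA Hl mulrA Hy //.
Qed.

Lemma cprod_kill (l : seq R) (a y : R) : (forall y, y \in l -> idempotent_el y) ->
  y \in l -> a * y = 0 -> a * \prod_(z <- l) z = 0.
Proof.
elim: l => [|z l IH] H //; rewrite inE big_cons => /orP[/eqP<-|yl] ay.
  by rewrite mulrA ay mul0r.
have Hz : idempotent_el z by apply: H; rewrite inE eqxx.
rewrite (Hab Hz) mulrA (IH _ yl ay) ?mul0r //.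
by move=> w wl; apply: H; rewrite inE wl orbT.
Qed.

Lemma cprod_fix (l : seq R) (b : R) : (forall y, y \in l -> y * b = b) ->
  \prod_(y <- l) y * b = b.
Proof.
elim: l => [|y l IH] H; first by rewrite big_nil mul1r.
rewrite big_cons -mulrA IH ?H ?inE ?eqxx //.
by move=> w wl; apply: H; rewrite inE wl orbT.
Qed.

Lemma lead_ex (h : A) : h != 0 -> exists b0, coef h b0 != 0 /\ forall b, elt b0 b -> coef h b = 0.
Proof.
move=> nz; set l := [seq b <- supp h | coef h b != 0].
have nl : l != [::].
  apply/eqP => El; move/eqP: nz; apply; apply: coef_eq0 => m.
  apply/eqP; apply/negP => /negP H.
  have : m \in l by rewrite mem_filter H supp_coef.
  by rewrite El.
have [b0 b0l Hb0] := exmax nl.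
exists b0; split; first by move: b0l; rewrite mem_filter => /andP[].
move=> b lt; apply/eqP; apply/negP => /negP H.
have : b \in l by rewrite mem_filter H supp_coef.
by move/Hb0; rewrite lt.
Qed.

Lemma max_filter (l : seq (expo n)) (P : pred (expo n)) : has P l ->
  exists a0, [/\ a0 \in l, P a0 & forall a, a \in l -> P a -> elt a0 a = false].
Proof.
move=> hP; set l' := [seq a <- l | P a].
have nl : l' != [::] by rewrite -size_eq0 size_filter -lt0n -has_count.
have [a0 a0l H] := exmax nl.
move: a0l; rewrite mem_filter => /andP[Pa al].
exists a0; split => // a a1 Pa1; apply: H; by rewrite mem_filter Pa1 a1.
Qed.

Lemma coef_Mphi (f : A) (e : R) m : idempotent_el e ->
  coef (f * phi e) m = coef f m * e.
Proof. by move=> He; rewrite -central_phi // coef_phiM Hab. Qed.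

Lemma key_right : right_pp R -> forall f : A, exists e, idempotent_el e /\
  forall g, f * g = 0 <-> phi e * g = g.
Proof.
move=> Hpp f.
have Ech : forall a : R, exists e, idempotent_el e /\ a * e = 0 /\
    forall b, a * b = 0 -> e * b = b.
  move=> a; have [e [He H]] := Hpp a; exists e; split => //; split.
    by have := (H e).2 (ex_intro _ 1 (esym (mulr1 e))); apply.
  move=> b ab; have [t ->] : exists t, b = e * t by apply: (H b).1 => y ->.
  by rewrite mulrA He.
pose E := fun a => proj1_sig (constructive_indefinite_description _ (Ech a)).
have EP : forall a, idempotent_el (E a) /\ a * E a = 0 /\
    forall b, a * b = 0 -> E a * b = b.
  move=> a; exact: (proj2_sig (constructive_indefinite_description _ (Ech a))).
have Eid : forall l : seq (expo n), forall y,
    y \in map (fun a => E (coef f a)) l -> idempotent_el y.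
  by move=> l y /mapP [a _ ->]; case: (EP (coef f a)).
set e := \prod_(y <- map (fun a => E (coef f a)) (supp f)) y.
have He : idempotent_el e by apply: cprod_idem; apply: Eid.
have fe : f * phi e = 0.
  apply: coef_eq0 => m; rewrite coef_Mphi //.
  case: (boolP (m \in supp f)) => ms.
    apply: (cprod_kill (y := E (coef f m))); first exact: Eid.
      by apply: map_f.
    by case: (EP (coef f m)) => _ [].
  by rewrite /coef (negbTE ms) mul0r.
exists e; split => // g; split; last first.
  by move=> <-; rewrite mulrA fe mul0r.
move=> fg; set h := g - phi e * g.
have fh : f * h = 0 by rewrite /h mulrBr fg mulrA fe mul0r subrr.
case: (altP (h =P 0)) => [h0|nz].
  by move/eqP: h0; rewrite /h subr_eq0 => /eqP <-.
exfalso.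
have [b0 [nzb Hb0]] := lead_ex nz.
set b := coef h b0 in nzb.
have eb : e * b = 0.
  rewrite /b /h coefB coef_phiM mulrBr mulrA He subrr //.
have hasS : has (fun a => coef f a * b != 0) (supp f).
  apply/negPn/negP; rewrite -all_predC => /allP Hall.
  move/eqP: nzb; apply; rewrite -eb; apply/esym; apply: cprod_fix.
  move=> y /mapP [a af ->]; case: (EP (coef f a)) => _ [_ ]; apply.
  by have := Hall a af; rewrite /= negbK => /eqP.
have [a0 [a0f nz0 Ha0]] := max_filter hasS.
have big0 : forall a, elt a0 a -> coef f a * b = 0.
  move=> a lt; case: (boolP (a \in supp f)) => af.
    apply/eqP; apply/negP => /negP H; by have := Ha0 a af H; rewrite lt.
  by rewrite /coef (negbTE af) mul0r.
set u := \prod_(y <- map (fun a => E (coef f a)) [seq a <- supp f | elt a0 a]) y.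
have Hu : idempotent_el u by apply: cprod_idem; apply: Eid.
have fu : forall a, elt a0 a -> coef f a * u = 0.
  move=> a lt; case: (boolP (a \in supp f)) => af.
    apply: (cprod_kill (y := E (coef f a))); first exact: Eid.
      by apply: map_f; rewrite mem_filter lt af.
    by case: (EP (coef f a)) => _ [].
  by rewrite /coef (negbTE af) mul0r.
have ub : u * b = b.
  apply: cprod_fix => y /mapP [a]; rewrite mem_filter => /andP [lt af] ->.
  by case: (EP (coef f a)) => _ [_]; apply; apply: big0.
have L := lead (f := f * phi u) (h := h) (a0 := a0) (b0 := b0).
have Z : (f * phi u) * h = 0 by rewrite -mulrA central_phi // mulrA fh mul0r.
rewrite Z coef0 coef_Mphi // in L.
have L' : coef f a0 * u * sp a0 b * coef (mon a0 * mon b0) (eadd a0 b0) = 0.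
  by rewrite -L // => a lt; rewrite coef_Mphi // fu.
have := rinv_cancel (lead_rinv a0 b0) L'.
move/compat1; rewrite -mulrA ub => H.
by rewrite H eqxx in nz0.
Qed.

Lemma key_left : left_pp R -> forall f : A, exists e, idempotent_el e /\
  forall g, g * f = 0 <-> g * phi e = g.
Proof.
move=> Hpp f.
have Ech : forall a : R, exists e, idempotent_el e /\ a * e = 0 /\
    forall b, b * a = 0 -> e * b = b.
  move=> a; have [e [He H]] := Hpp a; exists e; split => //; split.
    rewrite -(Hab He); have := (H e).2 (ex_intro _ 1 (esym (mul1r e))); by apply.
  move=> b ab; have [t ->] : exists t, b = t * e by apply: (H b).1 => y ->.
  by rewrite (Hab He) -mulrA He.
pose E := fun a => proj1_sig (constructive_indefinite_description _ (Ech a)).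
have EP : forall a, idempotent_el (E a) /\ a * E a = 0 /\
    forall b, b * a = 0 -> E a * b = b.
  move=> a; exact: (proj2_sig (constructive_indefinite_description _ (Ech a))).
have Eid : forall l : seq (expo n), forall y,
    y \in map (fun a => E (coef f a)) l -> idempotent_el y.
  by move=> l y /mapP [a _ ->]; case: (EP (coef f a)).
set e := \prod_(y <- map (fun a => E (coef f a)) (supp f)) y.
have He : idempotent_el e by apply: cprod_idem; apply: Eid.
have fe : f * phi e = 0.
  apply: coef_eq0 => m; rewrite coef_Mphi //.
  case: (boolP (m \in supp f)) => ms.
    apply: (cprod_kill (y := E (coef f m))); first exact: Eid.
      by apply: map_f.
    by case: (EP (coef f m)) => _ [].
  by rewrite /coef (negbTE ms) mul0r.
have ef : phi e * f = 0 by rewrite central_phi.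
exists e; split => // g; split; last first.
  by move=> <-; rewrite -mulrA ef mulr0.
move=> gf; set h := g - g * phi e.
have hf : h * f = 0 by rewrite /h mulrBl gf -mulrA ef mulr0 subrr.
case: (altP (h =P 0)) => [h0|nz].
  by move/eqP: h0; rewrite /h subr_eq0 => /eqP <-.
exfalso.
have [b0 [nzb Hb0]] := lead_ex nz.
set b := coef h b0 in nzb.
have eb : e * b = 0.
  rewrite /b /h coefB coef_Mphi // -(Hab He) mulrBr mulrA He subrr //.
have hasS : has (fun a => b * coef f a != 0) (supp f).
  apply/negPn/negP; rewrite -all_predC => /allP Hall.
  move/eqP: nzb; apply; rewrite -eb; apply/esym; apply: cprod_fix.
  move=> y /mapP [a af ->]; case: (EP (coef f a)) => _ [_ ]; apply.
  by have := Hall a af; rewrite /= negbK => /eqP.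
have [a0 [a0f nz0 Ha0]] := max_filter hasS.
have big0 : forall a, elt a0 a -> b * coef f a = 0.
  move=> a lt; case: (boolP (a \in supp f)) => af.
    apply/eqP; apply/negP => /negP H; by have := Ha0 a af H; rewrite lt.
  by rewrite /coef (negbTE af) mulr0.
set u := \prod_(y <- map (fun a => E (coef f a)) [seq a <- supp f | elt a0 a]) y.
have Hu : idempotent_el u by apply: cprod_idem; apply: Eid.
have fu : forall a, elt a0 a -> coef f a * u = 0.
  move=> a lt; case: (boolP (a \in supp f)) => af.
    apply: (cprod_kill (y := E (coef f a))); first exact: Eid.
      by apply: map_f; rewrite mem_filter lt af.
    by case: (EP (coef f a)) => _ [].
  by rewrite /coef (negbTE af) mul0r.
have ub : u * b = b.
  apply: cprod_fix => y /mapP [a]; rewrite mem_filter => /andP [lt af] ->.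
  by case: (EP (coef f a)) => _ [_]; apply; apply: big0.
have L := lead (f := h) (h := f * phi u) (a0 := b0) (b0 := a0).
have Z : h * (f * phi u) = 0 by rewrite mulrA hf mul0r.
rewrite Z coef0 in L.
have L' : b * sp b0 (coef f a0 * u) * coef (mon b0 * mon a0) (eadd b0 a0) = 0.
  by rewrite -coef_Mphi // L // => a lt; rewrite coef_Mphi // fu.
have := rinv_cancel (lead_rinv b0 a0) L'.
move/compat1; rewrite -(Hab Hu) mulrA.
rewrite -(Hab Hu) ub => H.
by rewrite H eqxx in nz0.
Qed.

Lemma fixA (l : seq R) (b : A) : (forall y, y \in l -> phi y * b = b) ->
  phi (\prod_(y <- l) y) * b = b.
Proof.
elim: l => [|y l IH] H; first by rewrite big_nil rmorph1 mul1r.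
rewrite big_cons rmorphM -mulrA IH ?H ?inE ?eqxx //.
by move=> w wl; apply: H; rewrite inE wl orbT.
Qed.

Lemma absorb (l : seq R) (y : R) : (forall z, z \in l -> idempotent_el z) -> y \in l ->
  y * \prod_(z <- l) z = \prod_(z <- l) z.
Proof.
elim: l => [|z l IH] H //; rewrite inE big_cons => /orP[/eqP->|yl].
  by rewrite mulrA (H z) // inE eqxx.
have Hy : idempotent_el y by apply: H; rewrite inE yl orbT.
rewrite mulrA (Hab Hy) -mulrA IH //.
by move=> w wl; apply: H; rewrite inE wl orbT.
Qed.

Lemma in_gen_r (s : seq A) (y : A) : y \in s -> rideal_gen s y.
Proof.
move=> ys; have ks : (index y s < size s)%N by rewrite index_mem.
pose k0 := Ordinal ks.
exists (fun k => (k == k0)%:R); rewrite (bigD1 k0) //= eqxx mulr1 big1 ?addr0.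
  by rewrite nth_index.
by move=> k /negbTE ->; rewrite mulr0.
Qed.

Lemma in_gen_l (s : seq A) (y : A) : y \in s -> lideal_gen s y.
Proof.
move=> ys; have ks : (index y s < size s)%N by rewrite index_mem.
pose k0 := Ordinal ks.
exists (fun k => (k == k0)%:R); rewrite (bigD1 k0) //= eqxx mul1r big1 ?addr0.
  by rewrite nth_index.
by move=> k /negbTE ->; rewrite mul0r.
Qed.

Lemma ac_right_of : right_pp R -> ac_right A.
Proof.
move=> Hpp s.
have Kch := key_right Hpp.
pose ER := fun y => proj1_sig (constructive_indefinite_description _ (Kch y)).
have EP : forall y, idempotent_el (ER y) /\ forall g, y * g = 0 <-> phi (ER y) * g = g.
  move=> y; exact: (proj2_sig (constructive_indefinite_description _ (Kch y))).
have Eid : forall z, z \in map ER s -> idempotent_el z.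
  by move=> z /mapP [y _ ->]; case: (EP y).
set e := \prod_(z <- map ER s) z.
have He : idempotent_el e by apply: cprod_idem.
have Ce : forall z : A, phi (1 - e) * z = z * phi (1 - e).
  move=> z; rewrite rmorphB rmorph1 mulrBl mulrBr mul1r mulr1 central_phi //.
have Fix : forall b, phi e * b = b <-> forall y, y \in s -> y * b = 0.
  move=> b; split.
    move=> H y ys; apply/(EP y).2; rewrite -H mulrA -rmorphM absorb //.
    exact: map_f.
  by move=> H; apply: fixA => z /mapP [y ys ->]; apply/(EP y).2; apply: H.
have Kill : forall y, y * phi (ER y) = 0.
  by move=> y; apply/(EP y).2; rewrite -rmorphM (EP y).1.
exists (phi (1 - e)) => b; split.
- move=> H z [t ->]; rewrite big_ord1 /= Ce -mulrA.
  have : phi e * b = b by apply/Fix => y ys; apply: H; apply: in_gen_r.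
  by rewrite rmorphB rmorph1 mulrBl mul1r => ->; rewrite subrr mulr0.
- move=> H z [t ->].
  have h1 : phi (1 - e) * b = 0.
    apply: H; exists (fun _ => 1).
    by rewrite big_ord1 mulr1.
  have Hb : phi e * b = b.
    by move: h1; rewrite rmorphB rmorph1 mulrBl mul1r => /eqP; rewrite subr_eq0 => /eqP.
  have Hs := (Fix b).1 Hb.
  rewrite mulr_suml big1 // => k _.
  have ys : s`_k \in s by rewrite mem_nth.
  have : phi (ER s`_k) * b = b by apply/(EP _).2; apply: Hs.
  move=> <-; rewrite -(mulrA _ (t k)) (mulrA (t k)) -(central_phi (EP _).1 (t k)).
  by rewrite !mulrA Kill !mul0r.
Qed.

Lemma ac_left_of : left_pp R -> ac_left A.
Proof.
move=> Hpp s.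
have Kch := key_left Hpp.
pose ER := fun y => proj1_sig (constructive_indefinite_description _ (Kch y)).
have EP : forall y, idempotent_el (ER y) /\ forall g, g * y = 0 <-> g * phi (ER y) = g.
  move=> y; exact: (proj2_sig (constructive_indefinite_description _ (Kch y))).
have Eid : forall z, z \in map ER s -> idempotent_el z.
  by move=> z /mapP [y _ ->]; case: (EP y).
set e := \prod_(z <- map ER s) z.
have He : idempotent_el e by apply: cprod_idem.
have Ce : forall z : A, phi (1 - e) * z = z * phi (1 - e).
  move=> z; rewrite rmorphB rmorph1 mulrBl mulrBr mul1r mulr1 central_phi //.
have Fix : forall b, b * phi e = b <-> forall y, y \in s -> b * y = 0.
  move=> b; split.
    move=> H y ys; apply/(EP y).2.
    by rewrite -H -mulrA -rmorphM -(Hab (Eid _ (map_f ER ys))) absorb // map_f.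
  move=> H; rewrite -central_phi //; apply: fixA => z /mapP [y ys ->].
  rewrite (central_phi (EP y).1); apply/(EP y).2; exact: H.
have Kill : forall y, phi (ER y) * y = 0.
  by move=> y; apply/(EP y).2; rewrite -rmorphM (EP y).1.
exists (phi (1 - e)) => b; split.
- move=> H z [t ->]; rewrite big_ord1 /= -Ce mulrA.
  have : b * phi e = b by apply/Fix => y ys; apply: H; apply: in_gen_l.
  by rewrite rmorphB rmorph1 mulrBr mulr1 => ->; rewrite subrr mul0r.
- move=> H z [t ->].
  have h1 : b * phi (1 - e) = 0.
    apply: H; exists (fun _ => 1).
    by rewrite big_ord1 mul1r.
  have Hb : b * phi e = b.
    by move: h1; rewrite rmorphB rmorph1 mulrBr mulr1 => /eqP; rewrite subr_eq0 => /eqP.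
  have Hs := (Fix b).1 Hb.
  rewrite mulr_sumr big1 // => k _.
  have ys : s`_k \in s by rewrite mem_nth.
  have : b * phi (ER s`_k) = b by apply/(EP _).2; apply: Hs.
  move=> <-; rewrite -mulrA (mulrA (phi _)) (central_phi (EP _).1 (t k)).
  by rewrite -(mulrA (t k)) Kill !mulr0.
Qed.
End Ring.

Theorem mainTheorem3 (R A : pzRingType) (phi : {rmorphism R -> A}) (n : nat)
  (x : 'I_n -> A) (d : 'I_n -> 'I_n -> R)
  (sigma delta : 'I_n -> R -> R) :
  skew_PBW phi x d ->
  (forall (i : 'I_n) (r : R), x i * phi r = phi (sigma i r) * x i + phi (delta i r)) ->
  (* bijective extension *)
  (forall i : 'I_n, bijective (sigma i)) ->
  (forall i j : 'I_n, (i < j)%N -> invertible_el (d i j)) ->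
  sigma_rigid sigma -> abelian_ring R -> NI_ring R ->
  (right_pp R -> ac_right A) /\ (left_pp R -> ac_left A).
Proof.
move=> HPBW Hsd _ Hinv Hrig Hab _; split.
- exact: (ac_right_of HPBW Hsd Hinv Hrig Hab).
- exact: (ac_left_of HPBW Hsd Hinv Hrig Hab).
Qed.
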